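(* Let $C_0>0$, $\mathcal{U}_0=e^{C_0}/(1+e^{C_0})^2$, $m\in\mathcal{M}$, and let $\{\psi_1,\dots,\psi_{D}\}$ ($D=D_m$) be an orthonormal basis (for $\langle\cdot,\cdot\rangle_n$) of $\mathrm{span}\{\phi_k,k\in m\}$. For $\beta\in\mathbb{R}^D$ put $f_\beta=\sum_{j=1}^D\beta_j\psi_j$, and let $\Lambda_m$ be the set of $\beta$ such that $f_\beta\in\mathcal{S}_m\cap\mathbb{L}_\infty(C_0)$. If $\beta^*$ is any minimizer of $\beta\mapsto\gamma(f_\beta)$ over $\Lambda_m$, then for all $\beta\in\Lambda_m$, $$\frac{\mathcal{U}_0^2}{2}\|f_\beta-f_{\beta^*}\|_n^2\le\gamma(f_\beta)-\gamma(f_{\beta^*}).$$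
   Context: Observations $(Y_1,x_1),\dots,(Y_n,x_n)\in\{0,1\}\times\mathcal{X}$, deterministic $x_i$, independent $Y_i$ with $\mathbb{E}_{f_0}(Y_i)=\pi_{f_0}(x_i)$, $\pi_f(x)=e^{f(x)}/(1+e^{f(x)})$. $\gamma_n(f)=\frac1n\sum_{i=1}^n\{\log(1+e^{f(x_i)})-Y_if(x_i)\}$, $\gamma(f)=\mathbb{E}_{f_0}[\gamma_n(f)]$. $\langle f,g\rangle_n=\frac1n\sum_i f(x_i)g(x_i)$, $\|f\|_n^2=\langle f,f\rangle_n$. A dictionary $\{\phi_1,\dots,\phi_M\}$ is fixed; $\mathcal{M}$ is the set of subsets $m\subset\{1,\dots,M\}$, $\mathcal{S}_m=\{\sum_{j\in m}\beta_j\phi_j\}$, $D_m=\dim\mathrm{span}\{\phi_j,j\in m\}$. $\mathbb{L}_\infty(C_0)=\{f:\max_{1\le i\le n}|f(x_i)|\le C_0\}$. *)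

(* Defs.v *)
From HB Require Import structures.
From mathcomp Require Import all_boot all_order all_algebra.
From mathcomp Require Import all_classical all_reals all_analysis.
Set Implicit Arguments. Unset Strict Implicit. Unset Printing Implicit Defensive.
Import Order.TTheory GRing.Theory Num.Theory.
Local Open Scope ring_scope.

Section Defs.
Variables (R : realType) (X : Type) (n : nat) (x : 'I_n -> X).

Definition logistic (f : X -> R) (t : X) : R := expR (f t) / (1 + expR (f t)).

Definition inner_n (f g : X -> R) : R := n%:R^-1 * \sum_(i < n) f (x i) * g (x i).
Definition sqnorm_n (f : X -> R) : R := inner_n f f.

Definition gamma_n (Y : 'I_n -> R) (f : X -> R) : R :=
  n%:R^-1 * \sum_(i < n) (ln (1 + expR (f (x i))) - Y i * f (x i)).

(* gamma(f) = E_{f0}[gamma_n(f)]: by linearity, since E(Y_i) = pi_{f0}(x_i),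
   this is gamma_n evaluated at Y_i := pi_{f0}(x_i). *)
Definition gamma (f0 : X -> R) (f : X -> R) : R :=
  gamma_n (fun i => logistic f0 (x i)) f.

Definition Linf (C0 : R) (f : X -> R) : Prop := forall i : 'I_n, `|f (x i)| <= C0.
End Defs.

Definition in_Sm (R : realType) (X : Type) (M : nat) (phi : 'I_M -> X -> R)
  (m : {set 'I_M}) (f : X -> R) : Prop :=
  exists b : 'I_M -> R, f = (fun t => \sum_(j in m) b j * phi j t).

Definition fbeta (R : realType) (X : Type) (D : nat) (psi : 'I_D -> X -> R)
  (beta : 'I_D -> R) : X -> R := fun t => \sum_(j < D) beta j * psi j t.

(* Main.v *)
Require Import Defs.
From HB Require Import structures.
From mathcomp Require Import all_boot all_order all_algebra.
From mathcomp Require Import all_classical all_reals all_analysis.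
From mathcomp Require Import ring lra.
Import Order.TTheory GRing.Theory Num.Theory.
Local Open Scope ring_scope.

Import numFieldNormedType.Exports.
Local Open Scope ring_scope.

Section S.
Variable R : realType.

Definition hh (k : R) (s : R) : R := ln (1 + expR s) - k * s ^+ 2.
Definition hh1 (k : R) (s : R) : R := expR s / (1 + expR s) - k * (2 * s).
Definition hh2 (k : R) (s : R) : R := expR s / (1 + expR s) ^+ 2 - k * 2.

Lemma opos (s : R) : 0 < 1 + expR s :> R.
Proof. by rewrite addr_gt0 // expR_gt0. Qed.

Lemma dhh k (s : R) : is_derive (s : R) (1 : R) (hh k) (hh1 k s).
Proof.
have e1 : is_derive (s : R) (1:R) (fun s : R => (1 + expR s : R)) (expR s).
  have h := is_deriveD (is_derive_cst (1:R) (s:R) (1:R)) (is_derive_expR s).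
  by rewrite add0r in h; exact: h.
have e2 : is_derive (s : R) (1:R) ((@ln R : R -> R) \o (fun s : R => (1 + expR s : R))) ((1 + expR s)^-1 * expR s).
  apply: is_derive1_comp e1.
  idtac.
  exact: is_derive1_ln (opos s).
have e3 := is_deriveZ k (is_deriveX 2 (is_derive_id s (1:R))).
have e4 := is_deriveB e2 e3.
rewrite /hh /hh1.
apply: is_derive_eq e4 _.
rewrite /= expr1 [_^-1 * _]mulrC; congr (_ - _); rewrite /GRing.scale /= mulr1 //.

Qed.

Lemma e1l (s : R) : is_derive s (1:R) (fun s : R => (1 + expR s : R)) (expR s).
Proof.
have h := is_deriveD (is_derive_cst (1:R) (s:R) (1:R)) (is_derive_expR s).
by rewrite add0r in h; exact: h.
Qed.

Lemma ddhh k (s : R) : is_derive s (1 : R) (hh1 k) (hh2 k s).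
Proof.
have e2 := @is_deriveV R (fun s : R => 1 + expR s) s _ _ (lt0r_neq0 (opos s)) (e1l s).
have e3 := is_deriveM (is_derive_expR s) e2.
have e4 := is_deriveZ k (is_deriveZ 2 (is_derive_id s (1:R))).
have e5 := is_deriveB e3 e4.
rewrite /hh1 /hh2.
apply: is_derive_eq e5 _.
rewrite /GRing.scale /=.
have ne := lt0r_neq0 (opos s).
set e := expR s in ne *.
field.
by [].
Qed.

Lemma Dhh k : 'D_1 (hh k) = hh1 k.
Proof. by apply/funext => s; have [_ ->] := dhh k s. Qed.

Lemma cont_hh k (s : R) : {for s, continuous (hh k)}.
Proof.
apply: differentiable_continuous; apply/derivable1_diffP.
by have [] := dhh k s.
Qed.

Local Open Scope convex_scope.
Lemma convex_hh0 k (a b : R) (t : {i01 R}) : a <= b ->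
  (forall x, a < x < b -> 0 <= hh2 k x) ->
  hh k ((a : R^o) <| t |> (b : R^o)) <= (hh k a : R^o) <| t |> (hh k b : R^o).
Proof.
move=> ab H.
apply: second_derivative_convex => //.
- by move=> x /H; rewrite Dhh; have [_ ->] := ddhh k x.
- exact/cvg_at_left_filter/cont_hh.
- exact/cvg_at_right_filter/cont_hh.
- by move=> z _; have [] := dhh k z.
- by move=> z _; rewrite Dhh; have [] := ddhh k z.
Qed.
Local Close Scope convex_scope.

Lemma hh_ineq k (a b t : R) : 0 <= t -> t <= 1 ->
  (forall x, (a < x < b) \/ (b < x < a) -> 0 <= hh2 k x) ->
  hh k (t * a + (1 - t) * b) <= t * hh k a + (1 - t) * hh k b.
Proof.
move=> t0 t1 H.
have [ab|ba] := leP a b.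
  have := @convex_hh0 k a b (Itv01 t0 t1) ab (fun x hx => H x (or_introl hx)).
  by rewrite !convRE /=.
have t0' : 0 <= 1 - t by rewrite subr_ge0.
have t1' : 1 - t <= 1 by rewrite lerBlDr lerDl.
have := @convex_hh0 k b a (Itv01 t0' t1') (ltW ba) (fun x hx => H x (or_intror hx)).
rewrite !convRE /=.
have -> : unstable.onem (1 - t) = t by rewrite /unstable.onem opprB addrC subrK.
by rewrite addrC [X in _ <= X]addrC.
Qed.

Lemma U0_le (C0 x : R) : `|x| <= C0 ->
  expR C0 / (1 + expR C0) ^+ 2 <= expR x / (1 + expR x) ^+ 2.
Proof.
move=> hx.
have hx1 : x <= C0 by apply: le_trans (ler_norm x) hx.
have hx2 : - C0 <= x by rewrite lerNl; apply: le_trans hx; rewrite -normrN ler_norm.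
have u0 : 0 < expR x := expR_gt0 x.
have v0 : 0 < expR C0 := expR_gt0 C0.
have uv : expR x <= expR C0 by rewrite ler_expR.
have uv1 : 1 <= expR x * expR C0.
  by rewrite -expRD -expR0 ler_expR -lerBlDr sub0r.
set u := expR x in u0 uv uv1 *; set v := expR C0 in v0 uv uv1 *.
rewrite ler_pdivrMr ?exprn_gt0 ?addr_gt0 // mulrAC ler_pdivlMr ?exprn_gt0 ?addr_gt0 //.
nra.
Qed.
End S.
Arguments hh {R}. Arguments hh1 {R}. Arguments hh2 {R}.

Theorem lemma6p2 (R : realType) (X : Type) (n : nat) (x : 'I_n -> X)
  (f0 : X -> R) (M : nat) (phi : 'I_M -> X -> R) (m : {set 'I_M})
  (C0 : R) (D : nat) (psi : 'I_D -> X -> R) (beta_star : 'I_D -> R) :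
  (0 < n)%N ->
  0 < C0 ->
  (* psi is an orthonormal basis of span{phi_k, k in m} for <.,.>_n *)
  (forall j : 'I_D, in_Sm phi m (psi j)) ->
  (forall j k : 'I_D, inner_n x (psi j) (psi k) = (j == k)%:R) ->
  (forall k : 'I_M, k \in m ->
     exists c : 'I_D -> R, phi k = (fun t => \sum_(j < D) c j * psi j t)) ->
  let U0 := expR C0 / (1 + expR C0) ^+ 2 in
  let Lambda := fun beta : 'I_D -> R =>
    in_Sm phi m (fbeta psi beta) /\ Linf x C0 (fbeta psi beta) in
  (* beta_star minimizes beta |-> gamma(f_beta) over Lambda_m *)
  Lambda beta_star ->
  (forall beta, Lambda beta ->
     gamma x f0 (fbeta psi beta_star) <= gamma x f0 (fbeta psi beta)) ->
  forall beta, Lambda beta ->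
    U0 ^+ 2 / 2 * sqnorm_n x (fun t => fbeta psi beta t - fbeta psi beta_star t)
    <= gamma x f0 (fbeta psi beta) - gamma x f0 (fbeta psi beta_star).
Proof.
move=> n0 C0pos _ _ _ U0 Lambda Ls Hmin beta Lb.
set fs := fbeta psi beta_star; set f := fbeta psi beta.
have e0 : 0 < expR C0 := expR_gt0 C0.
have U0pos : 0 < U0 by rewrite /U0 divr_gt0 // exprn_gt0 // addr_gt0.
have U0lt1 : U0 < 1.
  rewrite /U0 ltr_pdivrMr ?exprn_gt0 ?addr_gt0 // mul1r; nra.
have hU : forall z, `|z| <= C0 -> U0 <= expR z / (1 + expR z) ^+ 2.
  by move=> z hz; exact: U0_le.
clearbody U0.
set t := U0.
set bg := fun j => t * beta_star j + (1 - t) * beta j.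
have feq : fbeta psi bg = fun s => t * fs s + (1 - t) * f s.
  apply/funext => s; rewrite /fbeta /fs /f /bg !mulr_sumr -big_split /=.
  by apply: eq_bigr => j _; rewrite mulrDl !mulrA.
have Lg : Lambda bg.
  case: Ls => [[b1 Hb1] Ls2]; case: Lb => [[b2 Hb2] Lb2].
  split.
    exists (fun l => t * b1 l + (1 - t) * b2 l).
    rewrite feq; apply/funext => s.
    rewrite -/fs -/f in Hb1 Hb2.
    rewrite Hb1 Hb2 !mulr_sumr -big_split /=.
    by apply: eq_bigr => j _; ring.
  move=> i; rewrite feq /=.
  apply: le_trans (ler_normD _ _) _.
  have ht : `|t| = t by apply: ger0_norm; exact: ltW.
  have ht1 : `|1 - t| = 1 - t by apply: ger0_norm; rewrite subr_ge0 ltW.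
  rewrite !normrM ht ht1.
  have := Ls2 i; have := Lb2 i; rewrite -/fs -/f => h1 h2.
  have tpos : 0 < t := U0pos; have t1 : t < 1 := U0lt1.
  nra.
have Hg := Hmin bg Lg.
rewrite feq in Hg.
move: Hg; rewrite /gamma /gamma_n /sqnorm_n /inner_n.
set N := n%:R^-1.
have Npos : 0 < N by rewrite invr_gt0 ltr0n.
set Y := fun i => logistic f0 (x i).
set Sfs := \sum_(i < n) _.
set Sg := \sum_(i < n) _.
set Q := \sum_(i < n) _.
set Sf := \sum_(i < n) _.
move=> Hg.
have Hg' : Sfs <= Sg by rewrite -(ler_pM2l Npos).
have key : Sg <= t * Sfs + (1 - t) * Sf - t / 2 * t * (1 - t) * Q.
  rewrite /Sfs /Sf /Q /Sg !mulr_sumr -big_split -sumrB /=.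
  apply: ler_sum => i _.
  have ha : `|fs (x i)| <= C0 by case: Ls.
  have hb : `|f (x i)| <= C0 by case: Lb.
  have := @hh_ineq R (t / 2) (fs (x i)) (f (x i)) t (ltW U0pos) (ltW U0lt1).
  have H2 : forall z, (fs (x i) < z < f (x i)) \/ (f (x i) < z < fs (x i)) -> 0 <= hh2 (t / 2) z.
    move=> z hz; rewrite /hh2 subr_ge0 mulfVK ?pnatr_eq0 //.
    apply: hU.
    have [hA hB] : -C0 <= fs (x i) <= C0 /\ -C0 <= f (x i) <= C0.
      by split; rewrite -ler_norml.
    rewrite ler_norml.
    by case: hz => /andP[h1 h2]; case/andP: hA => ? ?; case/andP: hB => ? ?;
      apply/andP; split; lra.
  move=> /(_ H2); rewrite /hh => H.
  set a := fs (x i) in H *; set b := f (x i) in H *.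
  rewrite -subr_ge0.
  set L1 := ln (1 + expR (t * a + (1 - t) * b)) in H *.
  set La := ln (1 + expR a) in H *. set Lb2 := ln (1 + expR b) in H *.
  rewrite -subr_ge0 in H.
  set Yi := Y i.
  have -> : t * (La - Yi * a) + (1 - t) * (Lb2 - Yi * b) - t / 2 * t * (1 - t) * ((b - a) * (b - a)) -
     (L1 - Yi * (t * a + (1 - t) * b)) =
     t * (La - t / 2 * a ^+ 2) + (1 - t) * (Lb2 - t / 2 * b ^+ 2) -
     (L1 - t / 2 * (t * a + (1 - t) * b) ^+ 2) by ring.
  exact: H.
have H3 : t / 2 * t * Q <= Sf - Sfs.
  have h1t : 0 < 1 - t by rewrite subr_gt0.
  rewrite -(ler_pM2l h1t).
  have -> : (1 - t) * (Sf - Sfs) = t * Sfs + (1 - t) * Sf - Sfs - Sfs + Sfs - t * Sfs + t * Sfs - Sfs + Sfs - (1 - t) * Sfs + (1 - t) * Sfs - (1 - t) * Sfs + (1 - t) * Sf - (t * Sfs + (1 - t) * Sf) + Sfs + Sfs - Sfs - Sfs + Sfs by ring.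
  nra.
rewrite /t in H3 *.
have -> : U0 ^+ 2 / 2 * (N * Q) = N * (U0 / 2 * U0 * Q) by ring.
rewrite -mulrBr ler_pM2l //.
Qed.
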